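(* Let $N,d\in\mathbb{N}^+$, let $\Gamma\in\mathbb{R}^{N\times N}$ be symmetric positive semidefinite, $\Sigma\in\mathbb{R}^{d\times d}$ symmetric positive semidefinite, and $\mu\in\mathbb{R}^{dN}$. Fix $t\in(0,T]$ and a vector $v_t\in\mathbb{R}^{dN}$. Let $\alpha_t=e^{-t/2}$, $\sigma_t=\sqrt{1-e^{-t}}$, and $$\nabla\log p_t(v_t)=-\big(\alpha_t^2(\Gamma\otimes\Sigma)+\sigma_t^2 I\big)^{-1}(v_t-\alpha_t\mu).$$ Given an error tolerance $\epsilon\in(0,1)$ and any integer $J<N$, define $\bar\Gamma\in\mathbb{R}^{N\times N}$ by $\bar\Gamma_{ij}=\Gamma_{ij}\,\mathbf{1}\{|i-j|<J\}$ and assume $\bar\Gamma$ is positive semidefinite. Consider the gradient descent iteration $$s^{(k+1)}=s^{(k)}-\eta_t\Big(\big(\alpha_t^2(\bar\Gamma\otimes\Sigma)+\sigma_t^2 I\big)s^{(k)}+(v_t-\alpha_t\mu)\Big),\qquad s^{(0)}=0 .$$ Then with a suitable step size $\eta_t$, after $K=O\big(\kappa_t\log(1/\epsilon)\big)$ iterations, $$\big\|s^{(K)}(v_t)-\nabla\log p_t(v_t)\big\|_2\le \frac{1}{\sigma_t^2}\|v_t-\alpha_t\mu\|_2\,\epsilon+\frac{\|\Sigma\|_{\rm F}\,\|v_t-\alpha_t\mu\|_2}{\sigma_t^4}\sqrt{\sum_{|i-j|\ge J}\Gamma_{ij}^2},$$ where $\kappa_t=\kappa\big(\alpha_t^2(\bar\Gamma\otimes\Sigma)+\sigma_t^2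 I\big)$.
   Context: $\otimes$ denotes the Kronecker product and $I$ the identity of size $dN$. For a positive definite matrix $A$, $\kappa(A)=\lambda_{\max}(A)/\lambda_{\min}(A)$ is its condition number. $\|\cdot\|_{\rm F}$ is the Frobenius norm. The vector $-\big(\alpha_t^2(\Gamma\otimes\Sigma)+\sigma_t^2 I\big)^{-1}(v-\alpha_t\mu)$ is the score (gradient of the log-density) of the Gaussian distribution $N(\alpha_t\mu,\alpha_t^2\Gamma\otimes\Sigma+\sigma_t^2 I)$, which is the law at diffusion time $t$ of the Ornstein–Uhlenbeck forward process $dX_t=-\tfrac12X_tdt+dW_t$ started from $N(\mu,\Gamma\otimes\Sigma)$. *)

(* Defs.v *)
From HB Require Import structures.
From mathcomp Require Import all_boot all_order all_algebra.
From mathcomp Require Import boolp classical_sets reals sequences exp.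
From mathcomp Require Export mxtens.
Set Implicit Arguments. Unset Strict Implicit. Unset Printing Implicit Defensive.
Import Order.TTheory GRing.Theory Num.Theory.
Local Open Scope classical_set_scope.
Local Open Scope ring_scope.

Section Defs.
Variable R : realType.

Definition psd n (A : 'M[R]_n) : Prop :=
  A^T = A /\ forall x : 'cV[R]_n, 0 <= (x^T *m A *m x) 0 0.

Definition lam_max n (A : 'M[R]_n) : R := sup [set a : R | eigenvalue A a].
Definition lam_min n (A : 'M[R]_n) : R := inf [set a : R | eigenvalue A a].
Definition cond_num n (A : 'M[R]_n) : R := lam_max A / lam_min A.

Definition norm2 n (v : 'cV[R]_n) : R := Num.sqrt (\sum_(i < n) v i 0 ^+ 2).
Definition frob m n (A : 'M[R]_(m, n)) : R :=
  Num.sqrt (\sum_(i < m) \sum_(j < n) A i j ^+ 2).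

Definition band_trunc N (J : int) (G : 'M[R]_N) : 'M[R]_N :=
  \matrix_(i, j) (if `|(i : nat)%:Z - (j : nat)%:Z| < J then G i j else 0).

Definition tail_sq N (J : int) (G : 'M[R]_N) : R :=
  \sum_(i < N) \sum_(j < N | J <= `|(i : nat)%:Z - (j : nat)%:Z|) G i j ^+ 2.

Fixpoint gd_iter n (A : 'M[R]_n) (b : 'cV[R]_n) (eta : R) (k : nat) : 'cV[R]_n :=
  match k with
  | O => 0
  | S k' => let s := gd_iter A b eta k' in s - eta *: (A *m s + b)
  end.
End Defs.

(* Main.v *)
Require Import Defs.
From HB Require Import structures.
From mathcomp Require Import all_boot all_order all_algebra.
From mathcomp Require Import reals sequences exp mxtens complex spectral sesquilinear.
From mathcomp Require Import ring lra.
Set Implicit Arguments. Unset Strict Implicit. Unset Printing Implicit Defensive.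
Import Order.TTheory GRing.Theory Num.Theory Num.Def.
Local Open Scope ring_scope.
Section Real.
Variable R : realType.

Definition sqn n (x : 'cV[R]_n) : R := \sum_(i < n) x i 0 ^+ 2.
Definition quad n (A : 'M[R]_n) (x : 'cV[R]_n) : R := (x^T *m A *m x) 0 0.

Lemma sqn_ge0 n (x : 'cV[R]_n) : 0 <= sqn x.
Proof. by apply: sumr_ge0 => i _; rewrite sqr_ge0. Qed.

Lemma norm2E n (x : 'cV[R]_n) : norm2 x = Num.sqrt (sqn x).
Proof. by []. Qed.

Lemma sqn_eq0 n (x : 'cV[R]_n) : sqn x = 0 -> x = 0.
Proof.
move=> /eqP; rewrite psumr_eq0 => [/allP H|i _]; last by rewrite sqr_ge0.
apply/matrixP => i j; rewrite ord1 mxE; apply/eqP; rewrite -sqrf_eq0.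
by have := H i (mem_index_enum _); rewrite implyTb.
Qed.

Lemma CS n (f g : 'I_n -> R) :
  (\sum_i f i * g i) ^+ 2 <= (\sum_i f i ^+ 2) * (\sum_i g i ^+ 2).
Proof.
set X := \sum_i f i ^+ 2; set Y := \sum_i g i ^+ 2; set P := \sum_i f i * g i.
have X0 : 0 <= X by apply: sumr_ge0 => i _; rewrite sqr_ge0.
have Y0 : 0 <= Y by apply: sumr_ge0 => i _; rewrite sqr_ge0.
have [Xe|Xn] := eqVneq X 0.
  have fz : forall i, f i = 0.
    move: Xe => /eqP; rewrite psumr_eq0 => [/allP H i|i _]; last by rewrite sqr_ge0.
    by apply/eqP; rewrite -sqrf_eq0; have := H i (mem_index_enum _).
  rewrite /P big1 ?expr0n ?Xe ?mul0r // => i _; by rewrite fz mul0r.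
have Xp : 0 < X by rewrite lt_def Xn X0.
pose u := P / X.
have H : 0 <= \sum_i (u * f i - g i) ^+ 2 by apply: sumr_ge0 => i _; rewrite sqr_ge0.
have E : \sum_i (u * f i - g i) ^+ 2 = u ^+ 2 * X - 2 * u * P + Y.
  rewrite (eq_bigr (fun i => u^+2 * f i ^+2 - 2*u*(f i * g i) + g i ^+ 2)) => [|i _]; last by ring.
  by rewrite !big_split /= sumrN -!mulr_sumr.
rewrite E /u in H.
have : 0 <= Y - P ^+ 2 / X.
  suff -> : Y - P ^+ 2 / X = (P / X) ^+ 2 * X - 2 * (P / X) * P + Y by [].
  by field; rewrite Xn.
rewrite subr_ge0 ler_pdivrMr //. by rewrite mulrC.
Qed.
End Real.
Section Real2.
Variable R : realType.
Implicit Types (n : nat).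

Lemma norm2_ge0 n (x : 'cV[R]_n) : 0 <= norm2 x.
Proof. exact: sqrtr_ge0. Qed.

Lemma sqn_norm2 n (x : 'cV[R]_n) : sqn x = norm2 x ^+ 2.
Proof. by rewrite norm2E sqr_sqrtr // sqn_ge0. Qed.

Lemma norm2_le n (x : 'cV[R]_n) c : 0 <= c -> sqn x <= c ^+ 2 -> norm2 x <= c.
Proof.
move=> c0 H; rewrite norm2E -(ger0_norm c0) -sqrtr_sqr.
exact: ler_wsqrtr.
Qed.

Lemma dot_le n (x y : 'cV[R]_n) : \sum_i x i 0 * y i 0 <= norm2 x * norm2 y.
Proof.
apply: (le_trans (ler_norm _)); rewrite -sqrtr_sqr !norm2E -sqrtrM ?sqn_ge0 //.
exact/ler_wsqrtr/CS.
Qed.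

Lemma sqnD n (x y : 'cV[R]_n) :
  sqn (x + y) = sqn x + 2 * \sum_i x i 0 * y i 0 + sqn y.
Proof.
rewrite /sqn (eq_bigr (fun i => x i 0 ^+ 2 + 2 * (x i 0 * y i 0) + y i 0 ^+ 2)).
  by rewrite !big_split /= -mulr_sumr.
by move=> i _; rewrite mxE; ring.
Qed.

Lemma norm2D n (x y : 'cV[R]_n) : norm2 (x + y) <= norm2 x + norm2 y.
Proof.
apply: norm2_le; first by rewrite addr_ge0 ?norm2_ge0.
rewrite sqnD !sqn_norm2 sqrrD lerD2r lerD2l.
have := dot_le x y; lra.
Qed.

Lemma sqnZ n (k : R) (x : 'cV[R]_n) : sqn (k *: x) = k ^+ 2 * sqn x.
Proof. by rewrite /sqn mulr_sumr; apply: eq_bigr => i _; rewrite mxE exprMn. Qed.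

Lemma norm2Z n (k : R) (x : 'cV[R]_n) : norm2 (k *: x) = `|k| * norm2 x.
Proof. by rewrite !norm2E sqnZ sqrtrM ?sqr_ge0 // sqrtr_sqr. Qed.

Lemma norm2N n (x : 'cV[R]_n) : norm2 (- x) = norm2 x.
Proof. by rewrite -scaleN1r norm2Z normrN normr1 mul1r. Qed.

Lemma norm2B n (x y : 'cV[R]_n) : norm2 (x - y) <= norm2 x + norm2 y.
Proof. by rewrite -[norm2 y]norm2N; apply: norm2D. Qed.

Lemma frob_ge0 m n (M : 'M[R]_(m, n)) : 0 <= frob M.
Proof. exact: sqrtr_ge0. Qed.

Lemma frob_sq m n (M : 'M[R]_(m, n)) : frob M ^+ 2 = \sum_i \sum_j M i j ^+ 2.
Proof.
rewrite sqr_sqrtr //; apply: sumr_ge0 => i _; apply: sumr_ge0 => j _.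
by rewrite sqr_ge0.
Qed.

Lemma frob_mul m n (M : 'M[R]_(m, n)) (x : 'cV[R]_n) :
  norm2 (M *m x) <= frob M * norm2 x.
Proof.
apply: norm2_le; first by rewrite mulr_ge0 ?frob_ge0 ?norm2_ge0.
rewrite exprMn frob_sq -sqn_norm2 mulr_suml; apply: ler_sum => i _.
rewrite mxE; exact: CS.
Qed.

Lemma quad_dot n (x y : 'cV[R]_n) : (x^T *m y) 0 0 = \sum_i x i 0 * y i 0.
Proof. by rewrite mxE; apply: eq_bigr => i _; rewrite mxE. Qed.

Lemma inv_bound n (M : 'M[R]_n) (s : R) :
  0 < s -> (forall x, s * sqn x <= quad M x) ->
  M \in unitmx /\ forall y, norm2 (invmx M *m y) <= norm2 y / s.
Proof.
move=> s0 H.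
have Mu : M \in unitmx.
  rewrite unitmxE unitfE; apply/negP => /det0P [v vn0 vM].
  have := H v^T; rewrite /quad trmxK vM mul0mx mxE.
  rewrite pmulr_rle0 // => hv.
  have : sqn v^T = 0 by apply/eqP; rewrite eq_le hv sqn_ge0.
  move/sqn_eq0 => /(congr1 trmx); rewrite trmxK trmx0 => v0.
  by rewrite v0 eqxx in vn0.
split => // y.
set x := invmx M *m y.
have Hx := H x; rewrite /quad -mulmxA /x mulKVmx // -/x quad_dot in Hx.
have := le_trans Hx (dot_le x y); rewrite sqn_norm2 expr2 mulrA.
have [x0|xn0] := eqVneq (norm2 x) 0.
  by move=> _; rewrite x0 divr_ge0 ?norm2_ge0 // ltW.
have xp : 0 < norm2 x by rewrite lt_def xn0 norm2_ge0.
rewrite [norm2 x * norm2 y]mulrC ler_pM2r // => h; rewrite ler_pdivlMr // mulrC //.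
Qed.

End Real2.
Section Spec.
Variable R : realType.
Local Notation C := (R[i])%type.
Local Notation toC := (real_complex R).
Definition adj n (U : 'M[R[i]]_n) := map_mx conjC U^T.

Lemma spec_real n (A : 'M[R]_n) : A^T = A ->
  exists U : 'M[C]_n, exists f : 'I_n -> R,
   [/\ U *m adj U = 1%:M, adj U *m U = 1%:M,
     map_mx toC A = adj U *m diag_mx (\row_i toC (f i)) *m U &
     forall i, eigenvalue A (f i)].
Proof.
move=> At.
set Ac := map_mx toC A.
have sym : Ac \is symmetricmx.
  apply/is_hermitianmxP; rewrite expr0 scale1r map_mx_id // /Ac map_trmx At.
  by [].
have real : Ac \is a realmx.
  by apply/mxOverP => i j; rewrite mxE; apply/complex_realP; exists (A i j).
have herm := realsym_hermsym sym real.
have /orthomx_spectralP Aeq := hermitian_normalmx herm.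
have Uu := spectral_unitarymx Ac.
have UU : spectralmx Ac *m adj (spectralmx Ac) = 1%:M by apply/unitarymxP.
have dreal := hermitian_spectral_diag_real herm.
exists (spectralmx Ac), (fun i => complex.Re (spectral_diag Ac 0 i)).
have dE : \row_i toC (complex.Re (spectral_diag Ac 0 i)) = spectral_diag Ac.
  apply/rowP => i; rewrite mxE.
  have /mxOverP/(_ 0 i)/complex_realP [k ->] := dreal.
  by [].
rewrite dE; split => //.
- exact: mulmx1C.
- by rewrite {1}Aeq invmx_unitary.
move=> i.
set U := spectralmx Ac; set D := spectral_diag Ac.
have UA : U *m Ac = diag_mx D *m U.
  by rewrite {1}Aeq invmx_unitary // !mulmxA UU mul1mx.
have : eigenvalue Ac (toC (complex.Re (D 0 i))).
  apply/eigenvalueP; exists (row i U).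
    rewrite -row_mul UA mul_diag_mx; apply/rowP => j; rewrite !mxE.
    have /mxOverP/(_ 0 i)/complex_realP [k Dk] := dreal.
    by rewrite -/D Dk.
  apply/negP => /eqP r0.
  have : row i (U *m adj U) = 0 by rewrite row_mul r0 mul0mx.
  rewrite UU => /rowP/(_ i); rewrite !mxE eqxx /= => /eqP.
  by rewrite oner_eq0.
by rewrite eigenvalue_root_char -map_char_poly fmorph_root -eigenvalue_root_char.
Qed.
End Spec.
Section Quad.
Variable R : realType.
Local Notation C := (R[i])%type.
Local Notation toC := (real_complex R).

Lemma conj_toC (r : R) : conjC (toC r) = toC r.
Proof. by apply: conj_Creal; apply/complex_realP; exists r. Qed.

Lemma quad_formula n (U : 'M[C]_n) (f : 'I_n -> R) (B : 'M[R]_n) (x : 'cV[R]_n) :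
  map_mx toC B = adj U *m diag_mx (\row_i toC (f i)) *m U ->
  toC (quad B x) = \sum_i toC (f i) * `|(U *m map_mx toC x) i 0| ^+ 2.
Proof.
move=> BE.
have -> : toC (quad B x) = (map_mx toC (x^T *m B *m x)) 0 0 by rewrite mxE.
rewrite !map_mxM -map_trmx BE.
set xc := map_mx toC x; set y := U *m xc.
rewrite !mulmxA.
have xcc : map_mx conjC xc = xc by apply/matrixP => i j; rewrite !mxE conj_toC.
have -> : xc^T *m adj U = (map_mx conjC y)^T.
  by rewrite /y map_mxM xcc trmx_mul /adj -map_trmx.
rewrite -[_ *m U *m xc]mulmxA -/y mxE; apply: eq_bigr => j _.
rewrite mul_mx_diag !mxE normCK; ring.
Qed.

Lemma sum_formula n (U : 'M[C]_n) (x : 'cV[R]_n) :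
  adj U *m U = 1%:M ->
  toC (sqn x) = \sum_i `|(U *m map_mx toC x) i 0| ^+ 2.
Proof.
move=> UU.
have -> : sqn x = quad 1%:M x by rewrite /quad mulmx1 quad_dot; apply: eq_bigr => i _; rewrite expr2.
rewrite (@quad_formula n U (fun _ => 1)).
  by apply: eq_bigr => i _; rewrite rmorph1 mul1r.
have -> : diag_mx (\row_i toC 1) = 1%:M :> 'M[C]_n.
  by apply/matrixP => i j; rewrite !mxE rmorph1.
by rewrite mulmx1 UU map_mx1.
Qed.

Lemma quad_le n (U : 'M[C]_n) (f : 'I_n -> R) (B : 'M[R]_n) (x : 'cV[R]_n) L :
  adj U *m U = 1%:M ->
  map_mx toC B = adj U *m diag_mx (\row_i toC (f i)) *m U ->
  (forall i, f i <= L) -> quad B x <= L * sqn x.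
Proof.
move=> UU BE fL; rewrite -lecR.
rewrite (quad_formula x BE) rmorphM /= (sum_formula x UU) mulr_sumr.
apply: ler_sum => i _; apply: ler_wpM2r; first by rewrite exprn_ge0.
by rewrite lecR.
Qed.

Lemma quad_ge n (U : 'M[C]_n) (f : 'I_n -> R) (B : 'M[R]_n) (x : 'cV[R]_n) l :
  adj U *m U = 1%:M ->
  map_mx toC B = adj U *m diag_mx (\row_i toC (f i)) *m U ->
  (forall i, l <= f i) -> l * sqn x <= quad B x.
Proof.
move=> UU BE fL; rewrite -lecR.
rewrite (quad_formula x BE) rmorphM /= (sum_formula x UU) mulr_sumr.
apply: ler_sum => i _; apply: ler_wpM2r; first by rewrite exprn_ge0.
by rewrite lecR.
Qed.

Lemma quad_ge0 n (U : 'M[C]_n) (f : 'I_n -> R) (B : 'M[R]_n) (x : 'cV[R]_n) :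
  map_mx toC B = adj U *m diag_mx (\row_i toC (f i)) *m U ->
  (forall i, 0 <= f i) -> 0 <= quad B x.
Proof.
move=> BE f0; rewrite -(@lecR R) (quad_formula x BE) rmorph0.
apply: sumr_ge0 => i _; apply: mulr_ge0; last by rewrite exprn_ge0.
by rewrite -(rmorph0 toC) lecR.
Qed.
End Quad.
Section Kron.
Variable R : realType.
Local Notation C := (R[i])%type.
Local Notation toC := (real_complex R).

Lemma quadD n (A B : 'M[R]_n) x : quad (A + B) x = quad A x + quad B x.
Proof. by rewrite /quad mulmxDr mulmxDl mxE. Qed.

Lemma quadZ n k (A : 'M[R]_n) x : quad (k *: A) x = k * quad A x.
Proof. by rewrite /quad -scalemxAr -scalemxAl mxE. Qed.

Lemma quad1 n (x : 'cV[R]_n) : quad 1%:M x = sqn x.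
Proof. by rewrite /quad mulmx1 quad_dot; apply: eq_bigr => i _; rewrite expr2. Qed.

Lemma eigen_quad n (A : 'M[R]_n) a : eigenvalue A a ->
  exists x, 0 < sqn x /\ quad A x = a * sqn x.
Proof.
case/eigenvalueP => v vA vn0; exists v^T; split.
  rewrite lt_def sqn_ge0 andbT; apply/negP => /eqP/sqn_eq0/(congr1 trmx).
  by rewrite trmxK trmx0 => v0; rewrite v0 eqxx in vn0.
rewrite /quad trmxK vA -scalemxAl mxE -quad1 /quad trmxK mulmx1.
by [].
Qed.

Lemma eig_psd n (A : 'M[R]_n) a : psd A -> eigenvalue A a -> 0 <= a.
Proof.
move=> [_ pA] /eigen_quad [x [xp qx]].
by have := pA x; rewrite -/(quad A x) qx pmulr_lge0.
Qed.

Lemma tens_diag m p (f : 'I_m -> R) (g : 'I_p -> R) :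
  diag_mx (\row_i toC (f i)) *t diag_mx (\row_i toC (g i)) =
  diag_mx (\row_k toC (f (mxtens_unindex k).1 * g (mxtens_unindex k).2)).
Proof.
apply/matrixP => i j.
case: (mxtens_indexP i) => i1 i2; case: (mxtens_indexP j) => j1 j2.
rewrite tensmxE !mxE !mxtens_indexK /=.
have -> : (mxtens_index (i1, i2) == mxtens_index (j1, j2)) = (i1 == j1) && (i2 == j2).
  apply/eqP/andP => [/(congr1 (@mxtens_unindex m p))|[/eqP-> /eqP->]] //.
  by rewrite !mxtens_indexK => -[-> ->].
case: (i1 == j1); case: (i2 == j2); rewrite /= ?mulr1n ?mulr0n ?mulr0 ?mul0r //.
by rewrite rmorphM.
Qed.

Lemma psd_kron N d (G : 'M[R]_N) (S : 'M[R]_d) : psd G -> psd S -> psd (G *t S).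
Proof.
move=> pG pS; split; first by rewrite trmx_tens pG.1 pS.1.
move=> x; rewrite -/(quad _ x).
have [UG [fG [UG1 UG2 GE fGe]]] := spec_real pG.1.
have [US [fS [US1 US2 SE fSe]]] := spec_real pS.1.
apply: (@quad_ge0 _ _ (UG *t US)
  (fun k => fG (mxtens_unindex k).1 * fS (mxtens_unindex k).2)).
  rewrite map_mxT GE SE -!tensmx_mul -tens_diag; congr (_ *m _ *m _).
  by rewrite /adj -map_mxT trmx_tens.
move=> k; apply: mulr_ge0; [exact: (eig_psd pG) | exact: (eig_psd pS)].
Qed.
End Kron.
Section Count.
Variable R : realType.

Lemma count_lemma (q eps kappa : R) : 0 <= q -> 1 - q = kappa^-1 -> 0 < kappa ->
  0 < eps < 1 ->
  exists K : nat, K%:R <= kappa * ln (1 / eps) + 1 /\ q ^+ K <= eps.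
Proof.
move=> q0 qk k0 /andP[e0 e1].
have lnE : ln (1 / eps) = - ln eps by rewrite div1r lnV // posrE.
have lnp : 0 <= ln (1 / eps) by rewrite lnE oppr_ge0 ln_le0 // ltW.
set x := kappa * ln (1 / eps).
have x0 : 0 <= x by rewrite mulr_ge0 // ltW.
exists `|ceil x|%N.
have cx0 : 0 <= ceil x by rewrite ceil_ge0 (lt_le_trans _ x0) // ltrN10.
have KE : (`|ceil x|%N%:R : R) = (ceil x)%:~R by rewrite natr_absz ger0_norm.
split.
  rewrite KE; have := ceilB1_lt x; rewrite rmorphB /=; lra.
have xle : x <= `|ceil x|%N%:R by rewrite KE ceil_ge.
set K := `|ceil x|%N in xle *.
have qe : q <= expR (- kappa^-1) by rewrite -qk; have := expR_ge1Dx (q - 1); rewrite opprB; lra.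
apply: (le_trans (lerXn2r K _ _ qe)); rewrite ?nnegrE ?expR_ge0 //.
rewrite -expRM_natl -[X in _ <= X]lnK ?posrE // ler_expR.
have : ln (1 / eps) <= K%:R / kappa by rewrite ler_pdivlMr // mulrC.
rewrite lnE; lra.
Qed.
End Count.
Section Helpers.
Variable R : realType.
Local Notation C := (R[i])%type.
Local Notation toC := (real_complex R).

Lemma spec_affine n (U : 'M[C]_n) (f : 'I_n -> R) (B : 'M[R]_n) (c k : R) :
  adj U *m U = 1%:M ->
  map_mx toC B = adj U *m diag_mx (\row_i toC (f i)) *m U ->
  map_mx toC (c *: 1%:M + k *: B) =
    adj U *m diag_mx (\row_i toC (c + k * f i)) *m U.
Proof.
move=> UU BE.
rewrite map_mxD !map_mxZ map_mx1 BE.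
have -> : diag_mx (\row_i toC (c + k * f i)) =
   toC c *: 1%:M + toC k *: diag_mx (\row_i toC (f i)).
  apply/matrixP => i j; rewrite !mxE; case: (i == j); rewrite /= ?mulr1n ?mulr0n ?mulr0 ?addr0 //.
  by rewrite mulr1 rmorphD rmorphM.
rewrite mulmxDr mulmxDl -!scalemxAr -!scalemxAl mulmx1 UU.
by congr (_ *: _ + _ *: _).
Qed.

Lemma spec_sq n (U : 'M[C]_n) (f : 'I_n -> R) (B : 'M[R]_n) :
  U *m adj U = 1%:M ->
  map_mx toC B = adj U *m diag_mx (\row_i toC (f i)) *m U ->
  map_mx toC (B *m B) = adj U *m diag_mx (\row_i toC (f i ^+ 2)) *m U.
Proof.
move=> UU BE.
rewrite map_mxM BE.
have -> : diag_mx (\row_i toC (f i ^+ 2)) =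
   diag_mx (\row_i toC (f i)) *m diag_mx (\row_i toC (f i)).
  apply/matrixP => i j; rewrite mul_diag_mx !mxE.
  case: (i == j); rewrite /= ?mulr1n ?mulr0n ?mulr0 //.
  by rewrite rmorphXn.
set D := diag_mx (\row_i toC (f i)).
have -> : adj U *m D *m U *m (adj U *m D *m U) = adj U *m D *m (U *m adj U) *m D *m U.
  by rewrite !mulmxA.
by rewrite UU mulmx1 !mulmxA.
Qed.

Lemma sqn_mul n (M : 'M[R]_n) x : sqn (M *m x) = quad (M^T *m M) x.
Proof. by rewrite -quad1 /quad mulmx1 trmx_mul !mulmxA. Qed.

Lemma frobZ m n (k : R) (X : 'M[R]_(m, n)) : frob (k *: X) = `|k| * frob X.
Proof.
rewrite /frob -sqrtr_sqr -sqrtrM ?sqr_ge0 // mulr_sumr; congr Num.sqrt.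
apply: eq_bigr => i _; rewrite mulr_sumr; apply: eq_bigr => j _.
by rewrite mxE exprMn.
Qed.

Lemma frob_tens m n p q (X : 'M[R]_(m, n)) (Y : 'M[R]_(p, q)) :
  frob (X *t Y) = frob X * frob Y.
Proof.
rewrite /frob -sqrtrM; last by apply: sumr_ge0 => i _; apply: sumr_ge0 => j _; rewrite sqr_ge0.
congr Num.sqrt; rewrite mulr_sum; apply: eq_bigr => i _.
rewrite mulr_sum; apply: eq_bigr => j _.
by rewrite mxE exprMn.
Qed.

Lemma frob_band N J (G : 'M[R]_N) :
  frob (band_trunc J G - G) = Num.sqrt (tail_sq J G).
Proof.
rewrite /frob /tail_sq; congr Num.sqrt; apply: eq_bigr => i _.
rewrite [RHS]big_mkcond /=; apply: eq_bigr => j _.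
rewrite !mxE; case: ltP => _ /=; first by rewrite subrr expr0n.
by rewrite sub0r sqrrN.
Qed.

Lemma tens_subl m n p q (X Y : 'M[R]_(m, n)) (Z : 'M[R]_(p, q)) :
  X *t Z - Y *t Z = (X - Y) *t Z.
Proof. by apply/matrixP => i j; rewrite !mxE mulrBl. Qed.

End Helpers.
From mathcomp Require Import boolp classical_sets.
Lemma rec_gen (R : realType) n (A0 : 'M[R]_n) (b0 g s0 : 'cV[R]_n) (eta : R) :
  b0 = - (A0 *m s0) ->
  g - eta *: (A0 *m g + b0) - s0 = (1 *: 1%:M + (- eta) *: A0) *m (g - s0).
Proof.
move=> ->; rewrite mulmxDl -!scalemxAl mul1mx scale1r mulmxBr.
set Ag := A0 *m g; set As := A0 *m s0.
by apply/matrixP => i j; rewrite !mxE; ring.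
Qed.

Lemma pert_gen (R : realType) n (A1 A2 : 'M[R]_n) (y : 'cV[R]_n) :
  A1 \in unitmx -> A2 \in unitmx ->
  -(invmx A2 *m y) - -(invmx A1 *m y) = invmx A1 *m ((A2 - A1) *m (invmx A2 *m y)).
Proof.
move=> u1 u2; rewrite mulmxBl mulmxBr (mulmxA A2) mulmxV // mul1mx mulKmx //.
by rewrite opprK addrC.
Qed.

Theorem lemma1 (R : realType) :
  exists C : R, 0 < C /\
  forall (N d : nat), (0 < N)%N -> (0 < d)%N ->
  forall (G : 'M[R]_N) (S : 'M[R]_d) (mu : 'cV[R]_(N * d)) (T t : R)
         (v : 'cV[R]_(N * d)) (eps : R) (J : int),
  psd G -> psd S -> 0 < t -> t <= T -> 0 < eps < 1 -> J < (N : nat)%:Z ->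
  psd (band_trunc J G) ->
  let a := expR (- t / 2) in
  let sg := Num.sqrt (1 - expR (- t)) in
  let b := v - a *: mu in
  let score := - (invmx (a ^+ 2 *: (G *t S) + sg ^+ 2 *: 1%:M) *m b) in
  let Abar := a ^+ 2 *: (band_trunc J G *t S) + sg ^+ 2 *: 1%:M in
  exists (eta : R) (K : nat),
    0 < eta /\
    K%:R <= C * (cond_num Abar * ln (1 / eps)) + C /\
    norm2 (gd_iter Abar b eta K - score)
      <= norm2 b * eps / sg ^+ 2
         + frob S * norm2 b / sg ^+ 4 * Num.sqrt (tail_sq J G).
Proof.
exists 1; split => //.
move=> N d N0 d0 G S mu T t v eps J pG pS t0 tT epsb JN pGb a sg b score Abar.
have n0 : (0 < N * d)%N by rewrite muln_gt0 N0 d0.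
have et : expR (- t) < 1 by rewrite expR_lt1 oppr_lt0.
have sg2 : sg ^+ 2 = 1 - expR (- t) by rewrite sqr_sqrtr // subr_ge0 ltW.
have s0 : 0 < sg ^+ 2 by rewrite sg2 subr_gt0.
have a0 : 0 <= a ^+ 2 by rewrite sqr_ge0.
have a1 : a ^+ 2 <= 1.
  rewrite expr_le1 // ?expR_ge0 // expR_le1.
  by rewrite mulNr oppr_le0 divr_ge0 // ltW.
set A := a ^+ 2 *: (G *t S) + sg ^+ 2 *: 1%:M in score *.
have Abnd : forall M : 'M[R]_(N * d), psd M ->
    forall x, sg ^+ 2 * sqn x <= quad (a ^+ 2 *: M + sg ^+ 2 *: 1%:M) x.
  move=> M pM x; rewrite quadD !quadZ quad1 lerDr mulr_ge0 //.
  exact: pM.2.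
have [Abu Abinv] := inv_bound s0 (Abnd _ (psd_kron pGb pS)).
have [Au Ainv] := inv_bound s0 (Abnd _ (psd_kron pG pS)).
have AbT : Abar^T = Abar.
  by rewrite /Abar linearD /= !linearZ /= trmx_tens pGb.1 pS.1 trmx1.
have [U [f [U1 U2 AE fe]]] := spec_real AbT.
set Lsum := \sum_i `|f i|.
have fL : forall i, f i <= Lsum.
  move=> i; apply: (le_trans (ler_norm (f i))).
  rewrite /Lsum (bigD1 i) //= lerDl sumr_ge0 // => j _.
have Ebnd : forall l, eigenvalue Abar l -> sg ^+ 2 <= l /\ l <= Lsum.
  move=> l /eigen_quad [x [xp qx]]; split.
    by have := Abnd _ (psd_kron pGb pS) x; rewrite -/Abar qx ler_pM2r.
  by have := quad_le x U2 AE fL; rewrite qx ler_pM2r.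
set E := [set l : R | eigenvalue Abar l]%classic.
have hub : has_ubound E by exists Lsum => y /Ebnd [].
have hlb : has_lbound E by exists (sg ^+ 2) => y /Ebnd [].
have Ene : (E !=set0)%classic by exists (f (Ordinal n0)); exact: fe.
have fmax : forall i, f i <= sup E by move=> i; apply: ub_le_sup => //; exact: fe.
have fmin : forall i, inf E <= f i by move=> i; apply: ge_inf => //; exact: fe.
have lmin_s : sg ^+ 2 <= inf E by apply: lb_le_inf => // y /Ebnd [].
have lminp : 0 < inf E by exact: lt_le_trans s0 lmin_s.
have lmm : inf E <= sup E by exact: le_trans (fmin (Ordinal n0)) (fmax _).
have lmaxp : 0 < sup E by exact: lt_le_trans lminp lmm.
have condE : cond_num Abar = sup E / inf E by [].
set lmax := sup E in fmax lmm lmaxp condE; set lmin := inf E in fmin lmin_s lminp lmm condE.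
set q := 1 - lmin / lmax.
have q0 : 0 <= q by rewrite subr_ge0 ler_pdivrMr // mul1r.
have qk : 1 - q = (lmax / lmin)^-1 by rewrite /q opprB addrC subrK invf_div.
have [K [KB qK]] := count_lemma q0 qk (divr_gt0 lmaxp lminp) epsb.
exists lmax^-1, K; split; first by rewrite invr_gt0.
split; first by rewrite condE; lra.
set eta := lmax^-1.
set M := 1 *: (1%:M : 'M[R]_(N * d)) + (- eta) *: Abar.
have MT : M^T = M.
  by rewrite /M linearD /= !linearZ /= trmx1 AbT.
have MM := spec_sq U1 (spec_affine 1 (- eta) U2 AE).
have contr : forall x, norm2 (M *m x) <= q * norm2 x.
  move=> x; apply: norm2_le; first by rewrite mulr_ge0 ?norm2_ge0.
  rewrite sqn_mul MT exprMn -sqn_norm2; apply: (quad_le x U2 MM) => i.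
  apply: lerXn2r; rewrite ?nnegrE //.
  - rewrite mulNr subr_ge0 mulrC ler_pdivrMr // mul1r; exact: fmax.
  - rewrite /q mulNr lerD2l lerN2 mulrC /eta ler_pM2l ?invr_gt0 //; exact: fmin.
set sstar := - (invmx Abar *m b).
have bE : b = - (Abar *m sstar) by rewrite /sstar mulmxN mulmxA mulmxV // mul1mx opprK.
have rec : forall k, gd_iter Abar b eta k.+1 - sstar = M *m (gd_iter Abar b eta k - sstar).
  move=> k.
  exact: (@rec_gen R _ Abar b (gd_iter Abar b eta k) sstar eta bE).
have gdb : forall k, norm2 (gd_iter Abar b eta k - sstar) <= q ^+ k * (norm2 b / sg ^+ 2).
  elim => [|k IH].
    by rewrite /= sub0r /sstar opprK expr0 mul1r; exact: Abinv.
  rewrite rec exprS -mulrA; apply: (le_trans (contr _)).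
  by apply: ler_wpM2l.
set z := invmx Abar *m b.
have sdiff : sstar - score = invmx A *m ((Abar - A) *m z).
  exact: pert_gen.
have AAE : Abar - A = a ^+ 2 *: ((band_trunc J G - G) *t S).
  by rewrite /Abar /A opprD addrACA subrr addr0 -scalerBr tens_subl.
have pert : norm2 (sstar - score) <=
    frob S * Num.sqrt (tail_sq J G) * (norm2 b / sg ^+ 2) / sg ^+ 2.
  rewrite sdiff; apply: (le_trans (Ainv _)); rewrite ler_pM2r ?invr_gt0 //.
  apply: (le_trans (frob_mul _ _)); rewrite AAE frobZ frob_tens frob_band.
  rewrite ger0_norm //.
  set X := Num.sqrt (tail_sq J G); set F := frob S.
  have X0 : 0 <= X by exact: sqrtr_ge0.
  have F0 : 0 <= F by exact: frob_ge0.
  apply: (@le_trans _ _ (X * F * norm2 z)).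
    by apply: ler_wpM2r; rewrite ?norm2_ge0 // ler_piMl ?mulr_ge0.
  by rewrite [F * X]mulrC; apply: ler_wpM2l; rewrite ?mulr_ge0 //; exact: Abinv.
have -> : gd_iter Abar b eta K - score =
    (gd_iter Abar b eta K - sstar) + (sstar - score) by rewrite addrA subrK.
apply: (le_trans (norm2D _ _)); apply: lerD.
  apply: (le_trans (gdb K)); rewrite [norm2 b * eps]mulrC -mulrA.
  by apply: ler_wpM2r; rewrite ?divr_ge0 ?norm2_ge0 // ltW.
apply: (le_trans pert); rewrite le_eqVlt; apply/orP; left; apply/eqP.
have s4 : sg ^+ 4 = sg ^+ 2 * sg ^+ 2 by rewrite -exprD.
rewrite s4; field.
by move: s0; rewrite lt0r sqrf_eq0 => /andP[].
Qed.
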